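(* Let $L\ne\{0,1\}$ be a totally ordered C-lattice domain in which every element is a join of principal elements. The following are equivalent: (i) $L$ is sharp; (ii) $L$ is pseudo-Dedekind; (iii) $L$ is isomorphic (as an ordered multiplicative lattice) to $\mathbb{Z}_-$ or to $\mathbb{R}_1$.
   Context: A multiplicative lattice is a complete lattice $(L,\le)$ with bottom $0$ and top $1$ which is also a commutative monoid with identity $1$ such that $a(\bigvee_\alpha b_\alpha)=\bigvee_\alpha(ab_\alpha)$ for all $a,b_\alpha\in L$. For $x,y\in L$, $(y:x)=\bigvee\{a\in L: ax\le y\}$. An element $c$ is compact if $c\le\bigvee S$ implies $c\le\bigvee T$ for some finite $T\subseteq S$. A C-lattice is a multiplicative lattice in which $1$ is compact, the product of two compact elements is compact, and every element is a join of compact elements. A proper element $p\ne1$ is prime if $xy\le p$ implies $x\le p$ or $y\le p$; $L$ is a domain if $0$ is prime. An element $x$ is principal if $y\wedge zx=((y:x)\wedge z)x$ and $y\vee(z:x)=((yx\vee z):x)$ for all $y,z\in L$. $L$ is sharp if whenever $a_1a_2\le b$ with $a_1,a_2,b\in L$, there exist $b_1,b_2\in L$ with $a_i\le b_i$ ($i=1,2$) and $b=b_1b_2$. $L$ is pseudo-Dedekind if $(x:a)$ is principal whenever $x,a\in L$ and $x$ is principal. $\mathbb{Z}_-$ is the set of integers $\le0$ together with a symbol $-\infty$, with the usual order and with addition as multiplication (so $0$ is the top/identity and $-\infty$ the bottom). $\mathbb{R}_1$ is the set of all intervals $(r,\infty]$ and $[r,\infty]$ with $r$ a nonnegative real number,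 together with $\{\infty\}$, ordered by inclusion and with interval (Minkowski) addition as multiplication (so $[0,\infty]$ is the top/identity and $\{\infty\}$ the bottom); it is isomorphic to the ideal lattice of a valuation domain with value group $\mathbb{R}$. *)

(* Defs.v *)
From Stdlib Require Import Reals ZArith List.

Record MultLattice := {
  ml_car :> Type;
  ml_le : ml_car -> ml_car -> Prop;
  ml_sup : (ml_car -> Prop) -> ml_car;
  ml_mul : ml_car -> ml_car -> ml_car;
  ml_one : ml_car;
  ml_le_refl : forall x, ml_le x x;
  ml_le_antisym : forall x y, ml_le x y -> ml_le y x -> x = y;
  ml_le_trans : forall x y z, ml_le x y -> ml_le y z -> ml_le x z;
  ml_sup_ub : forall (S : ml_car -> Prop) x, S x -> ml_le x (ml_sup S);
  ml_sup_least : forall (S : ml_car -> Prop) y,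
      (forall x, S x -> ml_le x y) -> ml_le (ml_sup S) y;
  ml_one_top : forall x, ml_le x ml_one;
  ml_mulA : forall x y z, ml_mul x (ml_mul y z) = ml_mul (ml_mul x y) z;
  ml_mulC : forall x y, ml_mul x y = ml_mul y x;
  ml_mul1 : forall x, ml_mul ml_one x = x;
  ml_mul_sup : forall a (S : ml_car -> Prop),
      ml_mul a (ml_sup S) = ml_sup (fun z => exists b, S b /\ z = ml_mul a b)
}.

Section Notions.
Variable L : MultLattice.

Definition ml_bot : L := ml_sup L (fun _ => False).
Definition ml_join (x y : L) : L := ml_sup L (fun z => z = x \/ z = y).
Definition ml_meet (x y : L) : L :=
  ml_sup L (fun z => ml_le L z x /\ ml_le L z y).
Definition ml_colon (y x : L) : L := ml_sup L (fun a => ml_le L (ml_mul L a x) y).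

Definition compact (c : L) : Prop :=
  forall S : L -> Prop, ml_le L c (ml_sup L S) ->
    exists T : list L, (forall t, In t T -> S t) /\
                       ml_le L c (ml_sup L (fun z => In z T)).

Definition C_lattice : Prop :=
  compact (ml_one L) /\
  (forall a b, compact a -> compact b -> compact (ml_mul L a b)) /\
  (forall x, exists S : L -> Prop, (forall c, S c -> compact c) /\ x = ml_sup L S).

Definition prime_el (p : L) : Prop :=
  p <> ml_one L /\
  forall x y, ml_le L (ml_mul L x y) p -> ml_le L x p \/ ml_le L y p.

Definition is_domain : Prop := prime_el ml_bot.

Definition principal (x : L) : Prop :=
  forall y z,
    ml_meet y (ml_mul L z x) = ml_mul L (ml_meet (ml_colon y x) z) x /\
    ml_join y (ml_colon z x) = ml_colon (ml_join (ml_mul L y x) z) x.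

Definition sharp : Prop :=
  forall a1 a2 b, ml_le L (ml_mul L a1 a2) b ->
    exists b1 b2, ml_le L a1 b1 /\ ml_le L a2 b2 /\ b = ml_mul L b1 b2.

Definition pseudo_Dedekind : Prop :=
  forall x a, principal x -> principal (ml_colon x a).

Definition totally_ordered : Prop := forall x y, ml_le L x y \/ ml_le L y x.

Definition joins_of_principals : Prop :=
  forall x, exists S : L -> Prop, (forall p, S p -> principal p) /\ x = ml_sup L S.

Definition not_01 : Prop := exists x : L, x <> ml_bot /\ x <> ml_one L.

Definition iso_to (T : Type) (P : T -> Prop) (leT : T -> T -> Prop)
  (mulT : T -> T -> T) : Prop :=
  exists f : L -> T,
    (forall x, P (f x)) /\
    (forall t, P t -> exists x, f x = t) /\
    (forall x y, f x = f y -> x = y) /\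
    (forall x y, ml_le L x y <-> leT (f x) (f y)) /\
    (forall x y, f (ml_mul L x y) = mulT (f x) (f y)).

End Notions.

(* Z_- : integers <= 0 together with -oo (represented by None),
   usual order, addition as multiplication. *)
Definition Zm_carrier (t : option Z) : Prop :=
  match t with Some z => (z <= 0)%Z | None => True end.
Definition Zm_le (s t : option Z) : Prop :=
  match s, t with
  | None, _ => True
  | Some _, None => False
  | Some a, Some b => (a <= b)%Z
  end.
Definition Zm_mul (s t : option Z) : option Z :=
  match s, t with
  | Some a, Some b => Some (a + b)%Z
  | _, _ => None
  end.

(* R_1 : subsets of [0, oo] (extended reals; None stands for oo) of the form
   (r, oo], [r, oo] with r >= 0 real, and {oo}; ordered by inclusion, with
   Minkowski addition as multiplication. *)
Definition ext := option R.
Definition ext_add (a b : ext) : ext :=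
  match a, b with Some x, Some y => Some (x + y)%R | _, _ => None end.
Definition Iopen (r : R) : ext -> Prop :=
  fun x => match x with None => True | Some y => (r < y)%R end.
Definition Iclosed (r : R) : ext -> Prop :=
  fun x => match x with None => True | Some y => (r <= y)%R end.
Definition Iinf : ext -> Prop := fun x => x = None.
Definition R1_carrier (A : ext -> Prop) : Prop :=
  (exists r, (0 <= r)%R /\ A = Iopen r) \/
  (exists r, (0 <= r)%R /\ A = Iclosed r) \/
  A = Iinf.
Definition R1_le (A B : ext -> Prop) : Prop := forall x, A x -> B x.
Definition R1_mul (A B : ext -> Prop) : ext -> Prop :=
  fun z => exists a b, A a /\ B b /\ z = ext_add a b.

(* Main.v *)
Require Import Defs.
From Stdlib Require Import Reals ZArith List Lia Lra Classical ClassicalEpsilon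
  FunctionalExtensionality PropExtensionality.

Section Basic.
Context {L : MultLattice}.
Local Notation le := (ml_le L).
Local Notation mul := (ml_mul L).
Local Notation one := (ml_one L).
Local Notation sup := (ml_sup L).
Local Notation bot := (ml_bot L).
Local Notation col := (ml_colon L).

Lemma le_refl x : le x x. Proof. apply ml_le_refl. Qed.
Lemma le_trans x y z : le x y -> le y z -> le x z. Proof. apply ml_le_trans. Qed.
Lemma le_anti x y : le x y -> le y x -> x = y. Proof. apply ml_le_antisym. Qed.
Lemma le_one x : le x one. Proof. apply ml_one_top. Qed.
Lemma bot_le x : le bot x.
Proof. unfold ml_bot. apply ml_sup_least. intros _ []. Qed.
Lemma le_bot x : le x bot -> x = bot.
Proof. intros; apply le_anti; auto using bot_le. Qed.
Lemma mulC x y : mul x y = mul y x. Proof. apply ml_mulC. Qed.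
Lemma mulA x y z : mul x (mul y z) = mul (mul x y) z. Proof. apply ml_mulA. Qed.
Lemma mul1 x : mul one x = x. Proof. apply ml_mul1. Qed.
Lemma mulr1 x : mul x one = x. Proof. rewrite mulC; apply mul1. Qed.

Lemma mul_sup_le a S y : (forall s, S s -> le (mul a s) y) -> le (mul a (sup S)) y.
Proof.
  intros H. rewrite ml_mul_sup. apply ml_sup_least. intros z [b [Hb ->]]. auto.
Qed.
Lemma le_mul_sup a S s : S s -> le (mul a s) (mul a (sup S)).
Proof.
  intros H. rewrite ml_mul_sup. apply ml_sup_ub. eauto.
Qed.

Lemma mul_mono_r c a b : le a b -> le (mul c a) (mul c b).
Proof.
  intros H.
  assert (E : sup (fun z => z = a \/ z = b) = b).
  { apply le_anti. apply ml_sup_least. intros x [->| ->]; auto using le_refl.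
    apply ml_sup_ub; auto. }
  rewrite <- E. apply le_mul_sup. auto.
Qed.
Lemma mul_mono_l c a b : le a b -> le (mul a c) (mul b c).
Proof. intros; rewrite (mulC a), (mulC b); apply mul_mono_r; auto. Qed.
Lemma mul_mono a b c d : le a b -> le c d -> le (mul a c) (mul b d).
Proof. intros; eapply le_trans; [apply mul_mono_l|apply mul_mono_r]; eauto. Qed.
Lemma mul_le_l a b : le (mul a b) a.
Proof. rewrite <- (mulr1 a) at 2. apply mul_mono_r, le_one. Qed.
Lemma mul_le_r a b : le (mul a b) b.
Proof. rewrite mulC. apply mul_le_l. Qed.
Lemma mul_bot a : mul a bot = bot.
Proof. apply le_bot. unfold ml_bot at 1. apply mul_sup_le. intros _ []. Qed.
Lemma bot_mul a : mul bot a = bot.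
Proof. rewrite mulC; apply mul_bot. Qed.

Lemma col_ub y x a : le (mul a x) y -> le a (col y x).
Proof. intros; unfold ml_colon; apply ml_sup_ub; auto. Qed.
Lemma col_mul y x : le (mul (col y x) x) y.
Proof.
  rewrite mulC. unfold ml_colon. apply mul_sup_le. intros s Hs. rewrite mulC; auto.
Qed.
Lemma col_least y x c : (forall a, le (mul a x) y -> le a c) -> le (col y x) c.
Proof. intros H; unfold ml_colon; apply ml_sup_least; auto. Qed.
Lemma col_mono y y' x : le y y' -> le (col y x) (col y' x).
Proof.
  intros H. apply col_least. intros a Ha. apply col_ub. eapply le_trans; eauto.
Qed.
Lemma le_col y x : le y (col y x).
Proof. apply col_ub. apply mul_le_l. Qed.

Lemma meet_l a b : le a b -> ml_meet L a b = a.
Proof.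
  intros H; apply le_anti. unfold ml_meet; apply ml_sup_least; intros z [? ?]; auto.
  unfold ml_meet; apply ml_sup_ub; split; auto using le_refl.
Qed.
Lemma meet_r a b : le b a -> ml_meet L a b = b.
Proof.
  intros H; apply le_anti. unfold ml_meet; apply ml_sup_least; intros z [? ?]; auto.
  unfold ml_meet; apply ml_sup_ub; split; auto using le_refl.
Qed.
Lemma join_r a b : le a b -> ml_join L a b = b.
Proof.
  intros H; apply le_anti. unfold ml_join; apply ml_sup_least; intros z [-> | ->]; auto using le_refl.
  unfold ml_join; apply ml_sup_ub; auto.
Qed.
Lemma join_l a b : le b a -> ml_join L a b = a.
Proof.
  intros H; apply le_anti. unfold ml_join; apply ml_sup_least; intros z [-> | ->]; auto using le_refl.
  unfold ml_join; apply ml_sup_ub; auto.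
Qed.

Fixpoint pw (x : L) (n : nat) : L :=
  match n with O => one | S n => mul x (pw x n) end.

Lemma pw_add x i j : pw x (i + j) = mul (pw x i) (pw x j).
Proof. induction i; simpl. now rewrite mul1. now rewrite IHi, mulA. Qed.
Lemma pw_mul x i j : pw x (i * j) = pw (pw x i) j.
Proof.
  induction j; simpl. now rewrite Nat.mul_0_r.
  rewrite Nat.mul_succ_r, Nat.add_comm, pw_add, IHj. reflexivity.
Qed.
Lemma pw_mulx x y n : pw (mul x y) n = mul (pw x n) (pw y n).
Proof.
  induction n; simpl. now rewrite mul1. rewrite IHn.
  rewrite !mulA. f_equal. rewrite <- !mulA. f_equal. apply mulC.
Qed.
Lemma pw_mono x y n : le x y -> le (pw x n) (pw y n).
Proof. intros H; induction n; simpl. apply le_refl. apply mul_mono; auto. Qed.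
Lemma pw_anti x i j : i <= j -> le (pw x j) (pw x i).
Proof.
  intros H. replace j with ((j - i) + i) by lia. rewrite pw_add. apply mul_le_r.
Qed.

End Basic.


Section Good.
Variable L : MultLattice.
Local Notation le := (ml_le L).
Local Notation mul := (ml_mul L).
Local Notation one := (ml_one L).
Local Notation sup := (ml_sup L).
Local Notation bot := (ml_bot L).
Local Notation col := (ml_colon L).
Variable Htot : totally_ordered L.
Variable Hdom : is_domain L.

Definition good (x : L) : Prop :=
  x <> bot /\ (forall y, col (mul y x) x = y) /\
  (forall y, le y x -> y = mul (col y x) x).

Lemma bot_ne_one : bot <> one.
Proof. destruct Hdom as [H _]. auto. Qed.

Lemma dom_mul a b : mul a b = bot -> a = bot \/ b = bot.
Proof.
  intros H. destruct Hdom as [_ H2]. destruct (H2 a b) as [H3|H3].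
  rewrite H; apply le_refl. left; apply le_bot; auto. right; apply le_bot; auto.
Qed.

Lemma mul_ne_bot a b : a <> bot -> b <> bot -> mul a b <> bot.
Proof. intros Ha Hb H. destruct (dom_mul _ _ H); auto. Qed.

Lemma col_bot x : x <> bot -> col bot x = bot.
Proof.
  intros Hx. apply le_bot. apply col_least. intros a Ha.
  apply le_bot in Ha. destruct (dom_mul _ _ Ha) as [->| ->]. apply le_refl. tauto.
Qed.

Lemma principal_good x : principal L x -> x <> bot -> good x.
Proof.
  intros Hp Hx. split; auto. split.
  - intros y. destruct (Hp y bot) as [_ H]. rewrite col_bot in H by auto.
    rewrite join_l in H by apply bot_le. rewrite join_l in H by apply bot_le. auto.
  - intros y Hy. destruct (Hp y one) as [H _]. rewrite mul1 in H.
    rewrite meet_l in H by auto. rewrite meet_l in H by apply le_one. auto.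
Qed.

Lemma good_principal x : good x -> principal L x.
Proof.
  intros [Hx [HC HD]] y z. split.
  - destruct (Htot (mul z x) y) as [H|H].
    + rewrite meet_r by auto. rewrite meet_r; auto using col_ub.
    + rewrite meet_l by auto.
      assert (Hyx : le y x) by (eapply le_trans; [apply H| apply mul_le_r]).
      destruct (Htot (col y x) z) as [H2|H2].
      * rewrite meet_l by auto. auto.
      * rewrite meet_r by auto. apply le_anti; auto.
        eapply le_trans. apply mul_mono_l, H2. apply col_mul.
  - destruct (Htot (mul y x) z) as [H|H].
    + rewrite (join_r (mul y x) z) by auto. apply join_r. apply col_ub; auto.
    + rewrite (join_l (mul y x) z) by auto. rewrite HC. apply join_l.
      rewrite <- (HC y). apply col_mono; auto.
Qed.

Lemma bot_principal : principal L bot.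
Proof.
  intros y z. rewrite !mul_bot. split.
  - rewrite meet_r by apply bot_le. reflexivity.
  - assert (E : forall w, col w bot = one).
    { intros w. apply le_anti. apply le_one. apply col_ub. rewrite mul_bot. apply bot_le. }
    rewrite !E. rewrite join_r by apply le_one. reflexivity.
Qed.

Lemma principal_iff x : principal L x <-> x = bot \/ good x.
Proof.
  split.
  - intros H. destruct (classic (x = bot)); auto. right; apply principal_good; auto.
  - intros [->|H]. apply bot_principal. apply good_principal; auto.
Qed.

Lemma good_ne x : good x -> x <> bot. Proof. intros [H _]; auto. Qed.
Lemma good_C x y : good x -> col (mul y x) x = y. Proof. intros [_ [H _]]; auto. Qed.
Lemma good_D x y : good x -> le y x -> y = mul (col y x) x. Proof. intros [_ [_ H]]; auto. Qed.

Lemma cancel_le x a b : good x -> le (mul a x) (mul b x) -> le a b.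
Proof.
  intros Hx H. rewrite <- (good_C x a), <- (good_C x b) by auto. apply col_ub.
  eapply le_trans; [|apply H]. rewrite good_C by auto. apply le_refl.
Qed.
Lemma cancel_eq x a b : good x -> mul a x = mul b x -> a = b.
Proof.
  intros Hx H. apply le_anti; eapply cancel_le; eauto; rewrite H; apply le_refl.
Qed.

Lemma one_good : good one.
Proof.
  split. intro H; apply bot_ne_one; auto. split.
  - intros y. rewrite mulr1. apply le_anti. apply col_least. intros a. rewrite mulr1; auto.
    apply col_ub. rewrite mulr1. apply le_refl.
  - intros y _. rewrite mulr1. apply le_anti. apply col_ub. rewrite mulr1; apply le_refl.
    eapply le_trans; [|apply col_mul]. rewrite mulr1. apply le_refl.
Qed.

Lemma good_mul a b : good a -> good b -> good (mul a b).
Proof.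
  intros Ha Hb. split. apply mul_ne_bot; apply good_ne; auto. split.
  - intros y. apply le_anti.
    + apply col_least. intros t Ht. rewrite !mulA in Ht.
      apply (cancel_le b) in Ht; auto. apply (cancel_le a) in Ht; auto.
    + apply col_ub. apply le_refl.
  - intros y Hy. assert (Hya : le y a) by (eapply le_trans; [apply Hy|apply mul_le_l]).
    pose proof (good_D a y Ha Hya) as E.
    assert (Hc : le (col y a) b).
    { rewrite <- (good_C a b) by auto. apply col_mono. rewrite mulC; auto. }
    pose proof (good_D b _ Hb Hc) as E2.
    apply le_anti.
    + rewrite E at 1. rewrite E2 at 1. rewrite <- mulA, (mulC b a).
      apply mul_mono_l. apply col_ub. rewrite (mulC a b), mulA, <- E2, <- E. apply le_refl.
    + apply col_mul.
Qed.

Lemma pw_good x n : good x -> good (pw x n).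
Proof. intros H; induction n; simpl. apply one_good. apply good_mul; auto. Qed.

Lemma good_factor b1 b2 : good (mul b1 b2) -> good b1.
Proof.
  intros H.
  assert (HC : forall u v w, good (mul u v) -> col (mul w u) u = w).
  { intros u v w Huv. apply le_anti.
    - apply col_least. intros t Ht. apply (cancel_le (mul u v)); auto.
      rewrite !mulA. apply mul_mono_l; auto.
    - apply col_ub. apply le_refl. }
  split. intro E. apply (good_ne _ H). rewrite E, bot_mul. auto.
  split. intros y; eapply HC; eauto.
  intros y Hy.
  assert (Hy2 : le (mul y b2) (mul b1 b2)) by (apply mul_mono_l; auto).
  pose proof (good_D _ _ H Hy2) as E.
  set (c := col (mul y b2) (mul b1 b2)) in E.
  assert (Hb2 : good (mul b2 b1)) by (rewrite mulC; auto).
  assert (E2 : y = mul c b1).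
  { rewrite <- (HC b2 b1 y Hb2), <- (HC b2 b1 (mul c b1) Hb2). 
    rewrite E, mulA. reflexivity. }
  apply le_anti.
  - rewrite E2 at 1. apply mul_mono_l. apply col_ub. rewrite <- E2. apply le_refl.
  - apply col_mul.
Qed.

Lemma sharp_pD : sharp L -> pseudo_Dedekind L.
Proof.
  intros Hs x a Hx. apply principal_iff in Hx. apply principal_iff.
  destruct Hx as [->|Hx].
  - destruct (classic (a = bot)) as [->|Ha].
    + right. replace (col bot bot) with one. apply one_good.
      apply le_anti. apply col_ub. rewrite mul_bot. apply bot_le. apply le_one.
    + left. apply col_bot; auto.
  - right. destruct (Hs (col x a) a x (col_mul _ _)) as [b1 [b2 [H1 [H2 E]]]].
    assert (Hg : good b1) by (apply (good_factor b1 b2); rewrite <- E; auto).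
    replace (col x a) with b1; auto. apply le_anti; auto.
    apply col_ub. rewrite E. apply mul_mono_r; auto.
Qed.


Lemma transition (P : nat -> Prop) K : P 0 -> ~ P K -> exists m, P m /\ ~ P (S m).
Proof.
  intros H0 HK. induction K. contradiction.
  destruct (classic (P K)) as [H|H]. eauto. auto.
Qed.

Lemma least (P : nat -> Prop) j : P j -> exists n, P n /\ forall m, P m -> n <= m.
Proof.
  induction j as [j IH] using (well_founded_induction lt_wf). intros Hj.
  destruct (classic (exists m, m < j /\ P m)) as [[m [Hm Pm]]|N].
  apply (IH m Hm Pm). exists j; split; auto. intros m Pm.
  destruct (le_lt_dec j m); auto. exfalso; apply N; eauto.
Qed.

Variable HCl : C_lattice L.
Variable Hj : joins_of_principals L.

Lemma list_max (T : list L) : exists m, (m = bot \/ In m T) /\ forall t, In t T -> le t m.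
Proof.
  induction T as [|a T [m [Hm1 Hm2]]].
  - exists bot. split; auto. intros t [].
  - destruct (Htot a m) as [H|H].
    + exists m. split. destruct Hm1; auto. right; right; auto.
      intros t [<-|Ht]; auto.
    + exists a. split. right; left; auto. intros t [<-|Ht]. apply le_refl.
      eapply le_trans; eauto.
Qed.

Lemma NOT1 (S : L -> Prop) : (forall s, S s -> s <> one) -> ~ le one (sup S).
Proof.
  intros HS H. destruct HCl as [Hc1 _]. destruct (Hc1 S H) as [T [HT H1]].
  destruct (list_max T) as [m [Hm1 Hm2]].
  assert (Hm : le one m).
  { eapply le_trans; [apply H1|]. apply ml_sup_least. auto. }
  assert (m = one) by (apply le_anti; auto using le_one).
  destruct Hm1 as [->|Hm1]. apply bot_ne_one; auto. apply (HS m); auto.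
Qed.

Lemma PC c (S : L -> Prop) : good c -> (forall s, S s -> ~ le c s) -> ~ le c (sup S).
Proof.
  intros Hc Hcs H.
  apply (NOT1 (fun a => exists s, S s /\ a = col s c)).
  - intros a [s [Hs ->]] E. apply (Hcs s Hs). eapply le_trans; [|apply (col_mul s c)].
    rewrite E, mul1. apply le_refl.
  - apply (cancel_le c); auto. rewrite mul1. eapply le_trans; [apply H|].
    apply ml_sup_least. intros s Hs.
    assert (Hsc : le s c).
    { destruct (Htot s c); auto. exfalso; eapply Hcs; eauto. }
    rewrite (good_D c s Hc Hsc) at 1. apply mul_mono_l. apply ml_sup_ub. eauto.
Qed.

Lemma PCex c (S : L -> Prop) : good c -> le c (sup S) -> exists s, S s /\ le c s.
Proof.
  intros Hc H. apply NNPP. intro N. apply (PC c S Hc); auto.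
  intros s Hs Hcs. apply N; eauto.
Qed.

Lemma sup_goods x y : (forall a, good a -> le a x -> le a y) -> le x y.
Proof.
  intros H. destruct (Hj x) as [S [HS E]]. rewrite E. apply ml_sup_least.
  intros s Hs. destruct (proj1 (principal_iff s) (HS s Hs)) as [->|Hg].
  apply bot_le. apply H; auto. rewrite E. apply ml_sup_ub; auto.
Qed.

Lemma good_lt1 : not_01 L -> exists g, good g /\ g <> one.
Proof.
  intros [x [Hx1 Hx2]]. apply NNPP. intro N. apply Hx1. apply le_bot.
  apply sup_goods. intros a Ha Hax. exfalso. apply N. exists a. split; auto.
  intro E. subst a. apply Hx2. apply le_anti; auto using le_one.
Qed.

Variable HpD : pseudo_Dedekind L.

Lemma col_good x a : good x -> good (col x a).
Proof.
  intros Hx. destruct (proj1 (principal_iff _) (HpD x a (good_principal x Hx))) as [E|H]; auto.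
  exfalso. apply (good_ne x Hx). apply le_bot. rewrite <- E. apply le_col.
Qed.

Lemma ARCH t a : good t -> t <> one -> good a -> exists k, ~ le a (pw t k).
Proof.
  intros Ht Ht1 Ha. apply NNPP. intro N.
  assert (H : forall k, le a (pw t k)) by (intro k; apply NNPP; intro; apply N; eauto).
  set (c := sup (fun y => forall k, le y (pw t k))).
  assert (Hc : forall k, le c (pw t k)) by (intro k; apply ml_sup_least; auto).
  assert (Hac : le a c) by (apply ml_sup_ub; auto).
  assert (Hct : c = mul c t).
  { apply le_anti; [|apply mul_le_l].
    assert (Hct1 : le c t) by (pose proof (Hc 1) as H1; simpl in H1; rewrite mulr1 in H1; auto).
    pose proof (good_D t c Ht Hct1) as E.
    assert (Hcc : le (col c t) c).
    { apply ml_sup_ub. intros k. apply (cancel_le t); auto. rewrite <- E.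
      rewrite (mulC (pw t k)). apply (Hc (S k)). }
    rewrite E at 1. apply mul_mono_l; auto. }
  set (u := col a c).
  assert (Hu : good u) by (apply col_good; auto).
  assert (Hut : le (col u t) u).
  { apply col_least. intros w Hw. apply col_ub. rewrite Hct, (mulC c t), mulA.
    eapply le_trans; [apply mul_mono_l, Hw|]. apply col_mul. }
  destruct (Htot t u) as [H1|H1].
  - assert (Hu1 : u = one).
    { apply le_anti. apply le_one. eapply le_trans; [|apply Hut]. apply col_ub. rewrite mul1; auto. }
    assert (Eca : c = a).
    { apply le_anti; auto. pose proof (col_mul a c) as H2. fold u in H2. rewrite Hu1, mul1 in H2. auto. }
    apply Ht1. symmetry. apply (cancel_eq c). rewrite Eca; auto.
    rewrite mul1, (mulC t). auto.
  - pose proof (good_D t u Ht H1) as E.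
    assert (Eu : u = mul u t).
    { apply le_anti; [|apply mul_le_l]. rewrite E at 1. apply mul_mono_l; auto. }
    apply Ht1. symmetry. apply (cancel_eq u); auto. rewrite mul1, (mulC t); auto.
Qed.

Lemma pw_le_iff t i j : good t -> t <> one -> (le (pw t i) (pw t j) <-> (j <= i)%nat).
Proof.
  intros Ht Ht1. split; [|apply pw_anti].
  intros H. destruct (le_lt_dec j i) as [|Hij]; auto. exfalso.
  assert (H2 : le (pw t i) (mul t (pw t i))).
  { eapply le_trans; [apply H|]. apply (pw_anti t (S i) j). lia. }
  apply Ht1. symmetry. apply (cancel_eq (pw t i)). apply pw_good; auto.
  rewrite mul1. apply le_anti; auto. apply mul_le_r.
Qed.

Lemma pw_inj t i j : good t -> t <> one -> pw t i = pw t j -> i = j.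
Proof.
  intros Ht Ht1 E. pose proof (pw_le_iff t i j Ht Ht1) as H1.
  pose proof (pw_le_iff t j i Ht Ht1) as H2. rewrite E in H1, H2.
  assert (j <= i)%nat by (apply H1, le_refl). assert (i <= j)%nat by (apply H2, le_refl). lia.
Qed.

Section Discrete.
Variable pi : L.
Hypothesis Hpi : good pi.
Hypothesis Hpi1 : pi <> one.
Hypothesis Hmax : forall g, good g -> g <> one -> le g pi.

Lemma Dpow a : good a -> exists n, a = pw pi n.
Proof.
  intros Ha. destruct (ARCH pi a Hpi Hpi1 Ha) as [K HK].
  destruct (transition (fun k => le a (pw pi k)) K (le_one a) HK) as [k [Hk Hk1]].
  exists k. set (t := col a (pw pi k)).
  assert (Ht : good t) by (apply col_good; auto).
  pose proof (good_D _ _ (pw_good pi k Hpi) Hk) as E. fold t in E.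
  destruct (classic (t = one)) as [Et|Nt].
  - rewrite E, Et, mul1. reflexivity.
  - exfalso. apply Hk1. rewrite E. simpl. apply mul_mono_l. apply Hmax; auto.
Qed.

Lemma Dall x : x = bot \/ exists n, x = pw pi n.
Proof.
  destruct (classic (exists a, good a /\ le a x)) as [[a [Ha Hax]]|N].
  - right. destruct (Dpow a Ha) as [j ->].
    destruct (least (fun n => le (pw pi n) x) j Hax) as [N [HN HNm]].
    exists N. apply le_anti; auto. apply sup_goods. intros b Hb Hbx.
    destruct (Dpow b Hb) as [i ->]. apply pw_anti. apply HNm; auto.
  - left. apply le_bot. apply sup_goods. intros a Ha Hax. exfalso; eauto.
Qed.

Lemma pw_ne_bot n : pw pi n <> bot.
Proof. apply good_ne, pw_good; auto. Qed.

Definition FZ (x : L) : option Z :=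
  epsilon (inhabits None) (fun o => (x = bot /\ o = None) \/
     exists n, x = pw pi n /\ o = Some (- Z.of_nat n)%Z).

Lemma FZ_spec x : (x = bot /\ FZ x = None) \/ exists n, x = pw pi n /\ FZ x = Some (- Z.of_nat n)%Z.
Proof.
  unfold FZ. apply epsilon_spec. destruct (Dall x) as [->|[n ->]]; eauto.
Qed.

Lemma FZ_bot : FZ bot = None.
Proof.
  destruct (FZ_spec bot) as [[_ E]|[n [E _]]]; auto. exfalso; eapply pw_ne_bot; eauto.
Qed.

Lemma FZ_pw n : FZ (pw pi n) = Some (- Z.of_nat n)%Z.
Proof.
  destruct (FZ_spec (pw pi n)) as [[E _]|[m [E1 E2]]].
  exfalso; eapply pw_ne_bot; eauto.
  apply pw_inj in E1; auto. subst; auto.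
Qed.

Lemma discrete_iso : iso_to L (option Z) Zm_carrier Zm_le Zm_mul.
Proof.
  exists FZ. split; [|split; [|split; [|split]]].
  - intros x. destruct (Dall x) as [->|[n ->]]. rewrite FZ_bot; simpl; auto.
    rewrite FZ_pw. simpl. lia.
  - intros [z|] Hz.
    + simpl in Hz. exists (pw pi (Z.to_nat (- z))). rewrite FZ_pw. f_equal. lia.
    + exists bot. apply FZ_bot.
  - intros x y E. destruct (Dall x) as [->|[i ->]], (Dall y) as [->|[j ->]]; auto;
      rewrite ?FZ_bot, ?FZ_pw in E; try discriminate.
    injection E; intro E'. f_equal. lia.
  - intros x y. destruct (Dall x) as [->|[i ->]], (Dall y) as [->|[j ->]];
      rewrite ?FZ_bot, ?FZ_pw; simpl.
    + split; auto using le_refl.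
    + split; auto using bot_le.
    + split; [|tauto]. intro H. apply le_bot in H. eapply pw_ne_bot; eauto.
    + rewrite pw_le_iff by auto. lia.
  - intros x y. destruct (Dall x) as [->|[i ->]], (Dall y) as [->|[j ->]];
      rewrite ?bot_mul, ?mul_bot, ?FZ_bot, ?FZ_pw; simpl; auto.
    rewrite <- pw_add, FZ_pw. f_equal. lia.
Qed.

End Discrete.

Section Val.
Local Open Scope R_scope.
Variable p : L.
Hypothesis Hp : good p.
Hypothesis Hp1 : p <> one.

Lemma nat_unbounded (x : R) : exists n : nat, x < INR n.
Proof.
  destruct (archimed x) as [H1 _].
  destruct (Z_lt_le_dec (up x) 0) as [Hz|Hz].
  - exists 0%nat. simpl. apply IZR_lt in Hz. lra.
  - exists (Z.to_nat (up x)). rewrite INR_IZR_INZ, Z2Nat.id by auto. lra.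
Qed.

Lemma frac_le (m n m' n' : nat) : (0 < n)%nat -> (0 < n')%nat -> (m' * n <= m * n')%nat ->
  INR m' / INR n' <= INR m / INR n.
Proof.
  intros Hn Hn' H.
  assert (0 < INR n) by (apply lt_0_INR; lia).
  assert (0 < INR n') by (apply lt_0_INR; lia).
  assert (H2 : INR m' * INR n <= INR m * INR n') by (rewrite <- !mult_INR; apply le_INR; lia).
  apply Rmult_le_reg_r with (INR n * INR n'). nra.
  replace (INR m' / INR n' * (INR n * INR n')) with (INR m' * INR n) by (field; lra).
  replace (INR m / INR n * (INR n * INR n')) with (INR m * INR n') by (field; lra). auto.
Qed.

Definition Aset (a : L) : R -> Prop := fun q =>
  exists m n, (0 < n)%nat /\ q = INR m / INR n /\ le (pw a n) (pw p m).

Definition v (a : L) : R := epsilon (inhabits 0) (is_lub (Aset a)).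

Lemma Aset_bound a (m n : nat) : (0 < n)%nat -> le (pw p m) (pw a n) -> is_upper_bound (Aset a) (INR m / INR n).
Proof.
  intros Hn H q [m' [n' [Hn' [-> H']]]]. apply frac_le; auto.
  assert (E : le (pw p (m * n')) (pw p (m' * n))).
  { rewrite !pw_mul. eapply le_trans. apply pw_mono, H. rewrite <- pw_mul, Nat.mul_comm, pw_mul.
    apply pw_mono; auto. }
  apply pw_le_iff in E; auto; lia.
Qed.

Lemma v_lub a : good a -> is_lub (Aset a) (v a).
Proof.
  intros Ha. unfold v. apply epsilon_spec.
  destruct (ARCH p a Hp Hp1 Ha) as [K HK].
  assert (HK' : le (pw p K) a) by (destruct (Htot a (pw p K)); tauto).
  destruct (completeness (Aset a)) as [m Hm].
  - exists (INR K / INR 1). apply Aset_bound. lia. simpl pw. rewrite mulr1. auto.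
  - exists (INR 0 / INR 1). exists 0%nat, 1%nat. repeat split; auto. apply le_one.
  - eauto.
Qed.

Lemma A_le a m n : good a -> (0 < n)%nat -> le (pw a n) (pw p m) -> INR m / INR n <= v a.
Proof.
  intros Ha Hn H. apply (v_lub a Ha). exists m, n. auto.
Qed.

Lemma Upper a m n : good a -> (0 < n)%nat -> le (pw p m) (pw a n) -> v a <= INR m / INR n.
Proof.
  intros Ha Hn H. apply (v_lub a Ha). apply Aset_bound; auto.
Qed.

Lemma Between a n : good a -> (0 < n)%nat -> exists m,
  INR m / INR n <= v a /\ v a <= INR (S m) / INR n /\
  le (pw a n) (pw p m) /\ le (pw p (S m)) (pw a n).
Proof.
  intros Ha Hn. destruct (ARCH p (pw a n) Hp Hp1 (pw_good a n Ha)) as [K HK].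
  destruct (transition (fun m => le (pw a n) (pw p m)) K (le_one _) HK) as [m [H1 H2]].
  assert (H3 : le (pw p (S m)) (pw a n)) by (destruct (Htot (pw a n) (pw p (S m))); tauto).
  exists m. split; [apply A_le|split; [apply Upper|]]; auto.
Qed.

Lemma v_ge0 a : good a -> 0 <= v a.
Proof.
  intros Ha. replace 0 with (INR 0 / INR 1) by (simpl; field). apply A_le; auto. apply le_one.
Qed.

Lemma close_eq x y : (forall n, (0 < n)%nat -> x <= y + 2 / INR n /\ y <= x + 2 / INR n) -> x = y.
Proof.
  intros H. destruct (Rtotal_order x y) as [Hxy|[Hxy|Hxy]]; auto; exfalso.
  - destruct (nat_unbounded (2 / (y - x))) as [n Hn].
    assert (0 < 2 / (y - x)) by (apply Rdiv_lt_0_compat; lra).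
    assert (Hn0 : (0 < n)%nat) by (destruct n; simpl in Hn; [lra|lia]).
    destruct (H n Hn0) as [_ H2].
    assert (0 < INR n) by (apply lt_0_INR; lia).
    assert (2 / INR n < y - x).
    { apply Rmult_lt_reg_r with (INR n); auto. replace (2 / INR n * INR n) with 2 by (field; lra).
      apply Rmult_lt_reg_r with (/ (y - x)). apply Rinv_0_lt_compat; lra.
      replace ((y - x) * INR n * / (y - x)) with (INR n) by (field; lra). unfold Rdiv in Hn. lra. }
    lra.
  - destruct (nat_unbounded (2 / (x - y))) as [n Hn].
    assert (0 < 2 / (x - y)) by (apply Rdiv_lt_0_compat; lra).
    assert (Hn0 : (0 < n)%nat) by (destruct n; simpl in Hn; [lra|lia]).
    destruct (H n Hn0) as [H2 _].
    assert (0 < INR n) by (apply lt_0_INR; lia).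
    assert (2 / INR n < x - y).
    { apply Rmult_lt_reg_r with (INR n); auto. replace (2 / INR n * INR n) with 2 by (field; lra).
      apply Rmult_lt_reg_r with (/ (x - y)). apply Rinv_0_lt_compat; lra.
      replace ((x - y) * INR n * / (x - y)) with (INR n) by (field; lra). unfold Rdiv in Hn. lra. }
    lra.
Qed.

Lemma V1 a b : good a -> good b -> v (mul a b) = v a + v b.
Proof.
  intros Ha Hb. apply close_eq. intros n Hn.
  destruct (Between a n Ha Hn) as [ma [Ha1 [Ha2 [Ha3 Ha4]]]].
  destruct (Between b n Hb Hn) as [mb [Hb1 [Hb2 [Hb3 Hb4]]]].
  assert (Hab : good (mul a b)) by (apply good_mul; auto).
  assert (L1 : INR (ma + mb) / INR n <= v (mul a b)).
  { apply A_le; auto. rewrite pw_mulx, pw_add. apply mul_mono; auto. }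
  assert (L2 : v (mul a b) <= INR (S ma + S mb) / INR n).
  { apply Upper; auto. rewrite pw_mulx, pw_add. apply mul_mono; auto. }
  assert (0 < INR n) by (apply lt_0_INR; lia).
  rewrite plus_INR in L1, L2. rewrite !S_INR in L2, Ha2, Hb2.
  unfold Rdiv in *. set (k := / INR n) in *.
  rewrite ?S_INR in L2. rewrite !Rmult_plus_distr_r, ?Rmult_1_l in L2. split; lra.
Qed.

Lemma V_mono a b : good a -> good b -> le a b -> v b <= v a.
Proof.
  intros Ha Hb H. apply (v_lub b Hb). intros q [m [n [Hn [-> H']]]].
  apply A_le; auto. eapply le_trans; [apply pw_mono, H|]; auto.
Qed.

Lemma V_pos t : good t -> t <> one -> 0 < v t.
Proof.
  intros Ht Ht1. destruct (ARCH t p Ht Ht1 Hp) as [k Hk].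
  assert (Hk' : le (pw t k) (pw p 1)).
  { simpl pw. rewrite mulr1. destruct (Htot p (pw t k)); tauto. }
  destruct k as [|k]. { exfalso. apply Hk. apply le_one. }
  assert (H1 : INR 1 / INR (S k) <= v t) by (apply A_le; auto; lia).
  assert (0 < INR (S k)) by (apply lt_0_INR; lia).
  apply Rlt_le_trans with (INR 1 / INR (S k)); auto. apply Rdiv_lt_0_compat; [simpl; lra|auto].
Qed.

Lemma V_strict a b : good a -> good b -> le a b -> a <> b -> v b < v a.
Proof.
  intros Ha Hb H Hne. set (t := col a b).
  assert (Ht : good t) by (apply col_good; auto).
  pose proof (good_D b a Hb H) as E. fold t in E.
  assert (Ht1 : t <> one) by (intro E1; apply Hne; rewrite E, E1, mul1; auto).
  rewrite E, V1 by auto. pose proof (V_pos t Ht Ht1). lra.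
Qed.

Lemma V_le_iff a b : good a -> good b -> (le a b <-> v b <= v a).
Proof.
  intros Ha Hb. split. apply V_mono; auto.
  intros H. destruct (Htot a b) as [H1|H1]; auto.
  destruct (classic (b = a)) as [->|Hne]. apply le_refl.
  pose proof (V_strict b a Hb Ha H1 Hne). lra.
Qed.

Lemma V_inj a b : good a -> good b -> v a = v b -> a = b.
Proof.
  intros Ha Hb E. apply le_anti; apply V_le_iff; auto; lra.
Qed.

Lemma V_one : v one = 0.
Proof. pose proof (V1 one one one_good one_good) as E. rewrite mul1 in E. lra. Qed.

Lemma V_pw g k : good g -> v (pw g k) = INR k * v g.
Proof.
  intros Hg. induction k. simpl. rewrite V_one; ring.
  simpl pw. rewrite V1, IHk, S_INR by (auto using pw_good). ring.
Qed.

Section Dense.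
Hypothesis Hdense : forall g, good g -> g <> one -> exists h, good h /\ h <> one /\ ~ le h g.

Lemma le_eps x y : (forall eps, 0 < eps -> x < y + eps) -> x <= y.
Proof.
  intros H. destruct (Rle_dec x y) as [|N]; auto. exfalso.
  specialize (H (x - y)). lra.
Qed.

Lemma small eps : 0 < eps -> exists g, good g /\ g <> one /\ v g < eps.
Proof.
  intros Heps.
  assert (Q : forall n, exists g, good g /\ g <> one /\ INR (S n) * v g <= v p).
  { induction n as [|n [g [Hg [Hg1 Hgn]]]].
    - exists p. split; auto. split; auto. simpl. lra.
    - destruct (Hdense g Hg Hg1) as [h [Hh [Hh1 Hhg]]].
      assert (Hgh : le g h) by (destruct (Htot h g); tauto).
      set (h' := col g h).
      assert (Hh' : good h') by (apply col_good; auto).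
      pose proof (good_D h g Hh Hgh) as E. fold h' in E.
      assert (Hh'1 : h' <> one).
      { intro E1. apply Hhg. rewrite E, E1, mul1. apply le_refl. }
      assert (VE : v g = v h' + v h) by (rewrite E at 1; apply V1; auto).
      pose proof (V_pos h Hh Hh1). pose proof (V_pos h' Hh' Hh'1).
      assert (HN : 1 <= INR (S n)) by (rewrite S_INR; pose proof (pos_INR n); lra).
      rewrite S_INR with (n := S n).
      destruct (Rle_dec (v h) (v h')).
      + exists h. split; auto. split; auto. nra.
      + exists h'. split; auto. split; auto. nra. }
  destruct (nat_unbounded (v p / eps)) as [n Hn].
  destruct (Q n) as [g [Hg [Hg1 Hgn]]]. exists g. split; auto. split; auto.
  assert (H1 : v p < INR (S n) * eps).
  { rewrite S_INR. apply Rmult_lt_compat_r with (r := eps) in Hn; auto.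
    unfold Rdiv in Hn. rewrite Rmult_assoc, Rinv_l in Hn by lra.
    pose proof (v_ge0 p Hp). nra. }
  assert (0 < INR (S n)) by (apply lt_0_INR; lia).
  apply Rmult_lt_reg_l with (INR (S n)); auto. lra.
Qed.

Lemma approx r eps : 0 <= r -> 0 < eps -> exists b, good b /\ r <= v b /\ v b < r + eps.
Proof.
  intros Hr Heps. destruct (small eps Heps) as [g [Hg [Hg1 Hge]]].
  pose proof (V_pos g Hg Hg1) as Hgp.
  destruct (Rle_dec r 0) as [Hr0|Hr0].
  - exists one. split. apply one_good. rewrite V_one. lra.
  - destruct (nat_unbounded (r / v g)) as [K HK].
    assert (HK' : r < INR K * v g).
    { apply Rmult_lt_compat_r with (r := v g) in HK; auto.
      unfold Rdiv in HK. rewrite Rmult_assoc, Rinv_l in HK by lra. lra. }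
    destruct (transition (fun k => INR k * v g < r) K) as [k [Hk1 Hk2]].
    + simpl. lra.
    + lra.
    + exists (pw g (S k)). split. apply pw_good; auto.
      rewrite V_pw by auto. rewrite S_INR in *. lra.
Qed.

Definition X (r : R) : L := sup (fun a => good a /\ r < v a).

Lemma X_ge r a : good a -> r < v a -> le a (X r).
Proof. intros; apply ml_sup_ub; auto. Qed.

Lemma X_lt r a : good a -> le a (X r) -> r < v a.
Proof.
  intros Ha H. destruct (Rlt_le_dec r (v a)) as [|Hle]; auto. exfalso.
  apply (PC a (fun a => good a /\ r < v a) Ha); auto. intros s [Hs Hrs] Has.
  apply V_le_iff in Has; auto. lra.
Qed.

Lemma surj r : 0 <= r -> exists w, good w /\ v w = r.
Proof.
  intros Hr. destruct (approx (r + 1) 1) as [q [Hq [Hq1 _]]]; try lra.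
  set (u := col q (X r)). assert (Hu : good u) by (apply col_good; auto).
  set (w := col q u). assert (Hw : good w) by (apply col_good; auto).
  assert (Hvu1 : v q - r <= v u).
  { apply le_eps. intros eps Heps.
    destruct (approx (r + eps / 2) (eps / 2)) as [a [Ha [Ha1 Ha2]]]; try lra.
    assert (Hua : le (mul u a) q).
    { eapply le_trans. apply mul_mono_r, (X_ge r); auto; lra. apply col_mul. }
    apply V_le_iff in Hua; [|apply good_mul|]; auto. rewrite V1 in Hua by auto. lra. }
  assert (Hvu2 : v u <= v q - r).
  { apply le_eps. intros eps Heps.
    destruct (approx (v q - r) eps) as [b [Hb [Hb1 Hb2]]]; try lra.
    assert (Hbu : le b u).
    { apply col_ub. unfold X. apply mul_sup_le. intros s [Hs Hrs].
      apply V_le_iff; [apply good_mul| |]; auto. rewrite V1 by auto. lra. }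
    apply V_le_iff in Hbu; auto. lra. }
  exists w. split; auto. apply Rle_antisym.
  - apply le_eps. intros eps Heps.
    destruct (approx r eps) as [c [Hc [Hc1 Hc2]]]; try lra.
    assert (Hcw : le c w).
    { apply col_ub. apply V_le_iff; [apply good_mul| |]; auto. rewrite V1 by auto. lra. }
    apply V_le_iff in Hcw; auto. lra.
  - pose proof (col_mul q u) as H. fold w in H.
    apply V_le_iff in H; [|apply good_mul|]; auto. rewrite V1 in H by auto. lra.
Qed.

Definition FR (x : L) : ext -> Prop := fun e =>
  match e with None => True | Some t => exists a, good a /\ le a x /\ v a = t end.

Lemma FR_up x t t' : FR x (Some t) -> t <= t' -> FR x (Some t').
Proof.
  intros [a [Ha [Hax <-]]] Ht. destruct (surj t') as [w [Hw Ew]].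
  pose proof (v_ge0 a Ha); lra.
  exists w. split; auto. split; auto. eapply le_trans; [|apply Hax].
  apply V_le_iff; auto. lra.
Qed.

Lemma pred_ext (A B : ext -> Prop) : (forall e, A e <-> B e) -> A = B.
Proof.
  intros H. apply functional_extensionality. intros e. apply propositional_extensionality. auto.
Qed.

Lemma FR_carrier x : R1_carrier (FR x).
Proof.
  destruct (classic (exists a, good a /\ le a x)) as [[a0 [Ha0 Hax0]]|N].
  - set (E := fun t => FR x (Some t)).
    destruct (completeness (fun t => E (- t))) as [m [Hm1 Hm2]].
    + exists 0. intros t [a [Ha [_ Et]]]. pose proof (v_ge0 a Ha). lra.
    + exists (- v a0). exists a0. split; auto. split; auto. lra.
    + set (r := - m).
      assert (Hr1 : forall t, E t -> r <= t).
      { intros t Ht. assert (- t <= m) by (apply Hm1; rewrite Ropp_involutive; auto). unfold r; lra. }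
      assert (Hr2 : forall r', (forall t, E t -> r' <= t) -> r' <= r).
      { intros r' H. assert (m <= - r') by (apply Hm2; intros t Ht; specialize (H _ Ht); lra).
        unfold r; lra. }
      assert (Hr0 : 0 <= r).
      { apply Hr2. intros t [a [Ha [_ <-]]]. apply v_ge0; auto. }
      destruct (classic (E r)) as [Er|Nr].
      * right; left. exists r. split; auto. apply pred_ext. intros [y|]; simpl; [|tauto].
        split. apply Hr1. intros Hy. apply (FR_up x r y); auto.
      * left. exists r. split; auto. apply pred_ext. intros [y|]; simpl; [|tauto].
        split.
        -- intros Hy. assert (r <= y) by (apply Hr1; auto).
           destruct (Req_dec r y) as [<-|]; [contradiction|lra].
        -- intros Hy. apply NNPP. intros Ny.
           assert (y <= r); [|lra]. apply Hr2. intros t Ht.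
           destruct (Rle_dec y t) as [|Hyt]; auto. exfalso. apply Ny.
           apply (FR_up x t y); auto. lra.
  - right; right. apply pred_ext. intros [y|]; simpl; unfold Iinf.
    + split; [|discriminate]. intros [a [Ha [Hax _]]]. exfalso; eauto.
    + tauto.
Qed.

Lemma dense_iso : iso_to L (ext -> Prop) R1_carrier R1_le R1_mul.
Proof.
  assert (Hord : forall x y, le x y <-> R1_le (FR x) (FR y)).
  { intros x y. split.
    - intros H [t|] Ht; simpl in *; auto. destruct Ht as [a [Ha [Hax Et]]].
      exists a. split; auto. split; auto. eapply le_trans; eauto.
    - intros H. apply sup_goods. intros a Ha Hax.
      destruct (H (Some (v a))) as [b [Hb [Hby Eb]]]. exists a; auto.
      apply V_inj in Eb; auto. subst; auto. }
  exists FR. split; [|split; [|split; [|split]]].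
  - apply FR_carrier.
  - intros t [[r [Hr ->]]|[[r [Hr ->]]| ->]].
    + exists (X r). apply pred_ext. intros [y|]; simpl; [|tauto]. split.
      * intros [a [Ha [Hax <-]]]. apply X_lt; auto.
      * intros Hy. destruct (surj y) as [w [Hw Ew]]; [lra|].
        exists w. split; auto. split; auto. apply X_ge; auto. lra.
    + destruct (surj r Hr) as [w [Hw Ew]]. exists w.
      apply pred_ext. intros [y|]; simpl; [|tauto]. split.
      * intros [a [Ha [Hax <-]]]. rewrite <- Ew. apply V_le_iff; auto.
      * intros Hy. destruct (surj y) as [a [Ha Ea]]; [lra|].
        exists a. split; auto. split; auto. apply V_le_iff; auto. lra.
    + exists bot. apply pred_ext. intros [y|]; simpl; unfold Iinf.
      * split; [|discriminate]. intros [a [Ha [Hax _]]]. apply le_bot in Hax.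
        exfalso; apply (good_ne a); auto.
      * tauto.
  - intros x y E. apply le_anti; apply Hord; rewrite E; intros e; auto.
  - auto.
  - intros x y. apply pred_ext. intros [t|].
    + split.
      * intros [c [Hc [Hcxy <-]]].
        destruct (Hj y) as [Sy [HSy Ey]].
        rewrite Ey, ml_mul_sup in Hcxy.
        destruct (PCex c _ Hc Hcxy) as [z [[b [Hb ->]] Hcb]].
        destruct (Hj x) as [Sx [HSx Ex]].
        rewrite mulC, Ex, ml_mul_sup in Hcb.
        destruct (PCex c _ Hc Hcb) as [z [[a [Ha ->]] Hca]].
        assert (Hba : mul b a <> bot).
        { intro E0. rewrite E0 in Hca. apply le_bot in Hca. apply (good_ne c); auto. }
        assert (Ga : good a).
        { destruct (proj1 (principal_iff a) (HSx a Ha)) as [E0|]; auto.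
          exfalso; apply Hba; rewrite E0, mul_bot; auto. }
        assert (Gb : good b).
        { destruct (proj1 (principal_iff b) (HSy b Hb)) as [E0|]; auto.
          exfalso; apply Hba; rewrite E0, bot_mul; auto. }
        rewrite mulC in Hca.
        set (d := col c (mul a b)). assert (Hd : good d) by (apply col_good; auto).
        pose proof (good_D _ _ (good_mul a b Ga Gb) Hca) as Ec. fold d in Ec.
        exists (Some (v (mul d a))), (Some (v b)). split; [|split].
        -- exists (mul d a). split. apply good_mul; auto. split; auto.
           eapply le_trans. apply mul_le_r. rewrite Ex. apply ml_sup_ub; auto.
        -- exists b. split; auto. split; auto. rewrite Ey. apply ml_sup_ub; auto.
        -- simpl. f_equal. rewrite Ec, !V1 by (auto using good_mul). ring.
      * intros [[a0|] [[b0|] [Ha0 [Hb0 E]]]]; simpl in E; try discriminate.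
        injection E; intros ->.
        destruct Ha0 as [a [Ha [Hax <-]]], Hb0 as [b [Hb [Hby <-]]].
        exists (mul a b). split. apply good_mul; auto. split. apply mul_mono; auto.
        apply V1; auto.
    + simpl. split; auto. intros _. exists None, None. simpl. auto.
Qed.

End Dense.
End Val.

End Good.


Definition target_sharp {T : Type} (P : T -> Prop) (leT : T -> T -> Prop) (mulT : T -> T -> T) :=
  forall A1 A2 B, P A1 -> P A2 -> P B -> leT (mulT A1 A2) B ->
    exists B1 B2, P B1 /\ P B2 /\ leT A1 B1 /\ leT A2 B2 /\ B = mulT B1 B2.

Lemma iso_sharp (L : MultLattice) T P leT mulT :
  @target_sharp T P leT mulT -> iso_to L T P leT mulT -> sharp L.
Proof.
  intros Hs [f [HP [Hsurj [Hinj [Hle Hmul]]]]] a1 a2 b H.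
  apply Hle in H. rewrite Hmul in H.
  destruct (Hs (f a1) (f a2) (f b) (HP _) (HP _) (HP _) H) as [B1 [B2 [HB1 [HB2 [H1 [H2 E]]]]]].
  destruct (Hsurj B1 HB1) as [b1 <-]. destruct (Hsurj B2 HB2) as [b2 <-].
  exists b1, b2. split; [apply Hle; auto|split; [apply Hle; auto|]].
  apply Hinj. rewrite Hmul. auto.
Qed.

Lemma Zm_sharp : target_sharp Zm_carrier Zm_le Zm_mul.
Proof.
  intros A1 A2 B H1 H2 HB H.
  assert (Mt : forall C, Zm_mul C (Some 0%Z) = C) by (intros [c|]; simpl; [f_equal; lia|auto]).
  assert (Ml : forall C, Zm_mul (Some 0%Z) C = C) by (intros [c|]; simpl; auto).
  assert (Hle0 : forall C, Zm_carrier C -> Zm_le C (Some 0%Z)) by (intros [c|]; simpl; auto).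
  destruct (classic (Zm_le A1 B)) as [HA1|NA1].
  { exists B, (Some 0%Z). rewrite Mt. repeat split; auto; simpl; lia. }
  destruct (classic (Zm_le A2 B)) as [HA2|NA2].
  { exists (Some 0%Z), B. rewrite Ml. repeat split; auto; simpl; lia. }
  destruct A1 as [a1|]; [|simpl in NA1; tauto].
  destruct A2 as [a2|]; [|simpl in NA2; tauto].
  destruct B as [b|]; [|simpl in H; tauto].
  simpl in *. exists (Some a1), (Some (b - a1)%Z). simpl. repeat split; try lia.
  f_equal; lia.
Qed.

Local Open Scope R_scope.

Lemma pred_ext' (A B : ext -> Prop) : (forall e, A e <-> B e) -> A = B.
Proof.
  intros H. apply functional_extensionality. intros e. apply propositional_extensionality. auto.
Qed.

Lemma R1_in A B x y : A (Some x) -> B (Some y) -> R1_mul A B (Some (x + y)).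
Proof. intros. exists (Some x), (Some y). auto. Qed.


Lemma mul_cc s t : R1_mul (Iclosed s) (Iclosed t) = Iclosed (s + t).
Proof.
  apply pred_ext'. intros [z|]; simpl; split.
  - intros [[a|] [[b|] [Ha [Hb E]]]]; simpl in *; try discriminate. injection E; intros ->. lra.
  - intros Hz. exists (Some s), (Some (z - s)). simpl. repeat split; try lra. f_equal; ring.
  - auto.
  - intros _. exists None, None. simpl. auto.
Qed.

Lemma mul_co s t : R1_mul (Iclosed s) (Iopen t) = Iopen (s + t).
Proof.
  apply pred_ext'. intros [z|]; simpl; split.
  - intros [[a|] [[b|] [Ha [Hb E]]]]; simpl in *; try discriminate. injection E; intros ->. lra.
  - intros Hz. exists (Some s), (Some (z - s)). simpl. repeat split; try lra. f_equal; ring.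
  - auto.
  - intros _. exists None, None. simpl. auto.
Qed.

Lemma mul_oc s t : R1_mul (Iopen s) (Iclosed t) = Iopen (s + t).
Proof.
  apply pred_ext'. intros [z|]; simpl; split.
  - intros [[a|] [[b|] [Ha [Hb E]]]]; simpl in *; try discriminate. injection E; intros ->. lra.
  - intros Hz. exists (Some (z - t)), (Some t). simpl. repeat split; try lra. f_equal; ring.
  - auto.
  - intros _. exists None, None. simpl. auto.
Qed.

Lemma carrier_cases A : R1_carrier A -> A None /\ (forall x y, A (Some x) -> x <= y -> A (Some y)) /\
  (forall x, A (Some x) -> 0 <= x).
Proof.
  intros [[r [Hr ->]]|[[r [Hr ->]]| ->]]; simpl; unfold Iinf; repeat split; auto;
    intros; try lra; discriminate.
Qed.

Lemma mul_top B : R1_carrier B -> R1_mul B (Iclosed 0) = B.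
Proof.
  intros HB. destruct (carrier_cases B HB) as [HN [Hup _]].
  apply pred_ext'. intros [z|]; split.
  - intros [[a|] [[b|] [Ha [Hb E]]]]; simpl in *; try discriminate. injection E; intros ->.
    apply (Hup a); auto; lra.
  - intros Hz. exists (Some z), (Some 0). simpl. repeat split; auto; try lra. f_equal; ring.
  - auto.
  - intros _. exists None, None. simpl. auto.
Qed.

Lemma R1_mulC A B : R1_mul A B = R1_mul B A.
Proof.
  apply pred_ext'. intros z; split; intros [a [b [Ha [Hb E]]]]; exists b, a; repeat split; auto;
    rewrite E; destruct a, b; simpl; auto; f_equal; ring.
Qed.

Lemma R1_sharp : target_sharp R1_carrier R1_le R1_mul.
Proof.
  intros A1 A2 B H1 H2 HB H. unfold R1_le in *.
  destruct (carrier_cases _ H1) as [N1 [U1 P1]].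
  destruct (carrier_cases _ H2) as [N2 [U2 P2]].
  destruct (carrier_cases _ HB) as [NB [UB PB]].
  assert (Hc0 : R1_carrier (Iclosed 0)) by (right; left; exists 0; split; auto; lra).
  destruct (classic (forall e, A1 e -> B e)) as [HA1|NA1].
  { exists B, (Iclosed 0). repeat split; auto.
    - intros [y|] Hy; simpl; auto.
    - rewrite mul_top; auto. }
  destruct (classic (forall e, A2 e -> B e)) as [HA2|NA2].
  { exists (Iclosed 0), B. repeat split; auto.
    - intros [y|] Hy; simpl; auto.
    - rewrite R1_mulC, mul_top; auto. }
  apply not_all_ex_not in NA1. destruct NA1 as [[x1|] Hx1]; [|tauto].
  apply not_all_ex_not in NA2. destruct NA2 as [[x2|] Hx2]; [|tauto].
  apply imply_to_and in Hx1. apply imply_to_and in Hx2.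
  destruct Hx1 as [Ax1 Bx1], Hx2 as [Ax2 Bx2].
  assert (Hin : forall x y, A1 (Some x) -> A2 (Some y) -> B (Some (x + y))).
  { intros x y Hx Hy. apply H. apply R1_in; auto. }
  destruct HB as [[r [Hr ->]]|[[r [Hr ->]]| ->]].
  2: shelve.
  2: { exfalso. apply (Hin x1 x2) in Ax1; auto. discriminate. }
  (* B = Iopen r *)
  { simpl in Bx1.
    destruct H1 as [[s [Hs ->]]|[[s [Hs ->]]| ->]]; simpl in Ax1.
    - exists (Iopen s), (Iclosed (r - s)). repeat split.
      + left. exists s; auto.
      + right; left. exists (r - s). split; auto. lra.
      + auto.
      + intros [y|] Hy; simpl; auto. apply NNPP. intro Ny.
        assert (Hx : Iopen s (Some ((s + (r - y)) / 2))) by (simpl; lra).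
        pose proof (Hin _ _ Hx Hy). simpl in *. lra.
      + rewrite mul_oc. f_equal. ring.
    - exists (Iclosed s), (Iopen (r - s)). repeat split.
      + right; left. exists s; auto.
      + left. exists (r - s). split; auto. lra.
      + auto.
      + intros [y|] Hy; simpl; auto. apply NNPP. intro Ny.
        assert (Hx : Iclosed s (Some s)) by (simpl; lra).
        pose proof (Hin _ _ Hx Hy). simpl in *. lra.
      + rewrite mul_co. f_equal. ring.
    - unfold Iinf in Ax1. discriminate. }
  Unshelve.
  (* B = Iclosed r *)
  { simpl in Bx1.
    destruct H1 as [[s [Hs ->]]|[[s [Hs ->]]| ->]]; simpl in Ax1.
    - exists (Iclosed s), (Iclosed (r - s)). repeat split.
      + right; left. exists s; auto.
      + right; left. exists (r - s). split; auto. lra.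
      + intros [y|] Hy; simpl in *; auto. lra.
      + intros [y|] Hy; simpl; auto. apply NNPP. intro Ny.
        assert (Hx : Iopen s (Some ((s + (r - y)) / 2))) by (simpl; lra).
        pose proof (Hin _ _ Hx Hy). simpl in *. lra.
      + rewrite mul_cc. f_equal. ring.
    - exists (Iclosed s), (Iclosed (r - s)). repeat split.
      + right; left. exists s; auto.
      + right; left. exists (r - s). split; auto. lra.
      + auto.
      + intros [y|] Hy; simpl; auto. apply NNPP. intro Ny.
        assert (Hx : Iclosed s (Some s)) by (simpl; lra).
        pose proof (Hin _ _ Hx Hy). simpl in *. lra.
      + rewrite mul_cc. f_equal. ring.
    - unfold Iinf in Ax1. discriminate. }
Qed.

Local Close Scope R_scope.

Lemma pD_iso (L : MultLattice) : totally_ordered L -> is_domain L -> C_lattice L ->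
  joins_of_principals L -> not_01 L -> pseudo_Dedekind L ->
  iso_to L (option Z) Zm_carrier Zm_le Zm_mul \/ iso_to L (ext -> Prop) R1_carrier R1_le R1_mul.
Proof.
  intros Htot Hdom HCl Hj Hn HpD.
  destruct (good_lt1 L Htot Hdom Hj Hn) as [p [Hp Hp1]].
  destruct (classic (exists pi, good L pi /\ pi <> ml_one L /\
     forall g, good L g -> g <> ml_one L -> ml_le L g pi)) as [[pi [Hpi [Hpi1 Hmax]]]|N].
  - left. eapply discrete_iso; eauto.
  - right. eapply dense_iso with (p := p); eauto.
    intros g Hg Hg1. apply NNPP. intro N2. apply N. exists g. split; auto. split; auto.
    intros h Hh Hh1. apply NNPP. intro N3. apply N2. exists h. auto.
Qed.

Theorem theorem3p8 (L : MultLattice) :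
  not_01 L -> totally_ordered L -> C_lattice L -> is_domain L ->
  joins_of_principals L ->
  (sharp L <-> pseudo_Dedekind L) /\
  (pseudo_Dedekind L <->
     (iso_to L (option Z) Zm_carrier Zm_le Zm_mul \/
      iso_to L (ext -> Prop) R1_carrier R1_le R1_mul)).
Proof.
  intros Hn Htot HCl Hdom Hj.
  assert (HpS : pseudo_Dedekind L -> sharp L).
  { intros HpD. destruct (pD_iso L Htot Hdom HCl Hj Hn HpD) as [H|H].
    - eapply iso_sharp; [apply Zm_sharp|eauto].
    - eapply iso_sharp; [apply R1_sharp|eauto]. }
  assert (HSp : sharp L -> pseudo_Dedekind L) by (apply sharp_pD; auto).
  split; [split; auto|split].
  - apply pD_iso; auto.
  - intros [H|H]; apply HSp.
    + eapply iso_sharp; [apply Zm_sharp|eauto].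
    + eapply iso_sharp; [apply R1_sharp|eauto].
Qed.
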